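(* Consider the setting described in the context, fix a state $\boldsymbol{x}\in\mathcal{R}_r$ (so region $r$ is the active one), constants $\rho>0$, $\lambda>0$, $\beta_r\ge 0$, and a class $\mathcal{K}$ function $\alpha$. Suppose $m_r^V,m_r^h$ are the Gaussian-process posterior means and $\sigma_r^V,\sigma_r^h$ the posterior standard deviations given by the formulas in the context. Then the optimization problem in the variables $(\boldsymbol{u},d)\in\mathbb{R}^m\times\mathbb{R}$ $$\min_{\boldsymbol{u},d}\ \|\boldsymbol{u}\|_2^2+\rho d^2$$ subject to $$\hat{\dot V}(\boldsymbol{x},\boldsymbol{u})+m_r^V(\boldsymbol{x},\boldsymbol{u})+\beta_r\sigma_r^V(\boldsymbol{x},\boldsymbol{u})+\lambda V(\boldsymbol{x})\le d,$$ $$\hat{\dot h}(\boldsymbol{x},\boldsymbol{u})+m_r^h(\boldsymbol{x},\boldsymbol{u})-\beta_r\sigma_r^h(\boldsymbol{x},\boldsymbol{u})+\alpha(h(\boldsymbol{x}))\ge 0$$ is convex and can be converted into an equivalent standard second-order cone program of the form $$\min_{\boldsymbol{z}}\ \boldsymbol{f}^T\boldsymbol{z}\quad\text{s.t.}\quad \|M^i\boldsymbol{z}+\boldsymbol{n}^i\|_2\le (\boldsymbol{p}^i)^T\boldsymbol{z}+q^i,\quad i=1,\dots,n_c,$$ for a vector variable $\boldsymbol{z}\in\mathbb{R}^{n_z}$ and suitable (state-dependent) $\boldsymbol{f}$, matrices $M^i$, vectors $\boldsymbol{n}^i,\boldsymbol{p}^i$ and scalars $q^i$.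
   Context: Setting: a switching control-affine system $\dot{\boldsymbol{x}}=\sum_{r=1}^R\delta_r(f_r(\boldsymbol{x})+g_r(\boldsymbol{x})\boldsymbol{u})$ with state $\boldsymbol{x}\in\mathcal{X}\subset\mathbb{R}^n$ ($\mathcal{X}$ compact and convex) and input $\boldsymbol{u}\in\mathbb{R}^m$, where $\mathcal{R}_1,\dots,\mathcal{R}_R$ are pairwise disjoint sets covering $\mathcal{X}$ and $\delta_r(\boldsymbol{x})=1$ if $\boldsymbol{x}\in\mathcal{R}_r$ and $0$ otherwise. A nominal model $\dot{\boldsymbol{x}}=\hat f(\boldsymbol{x})+\hat g(\boldsymbol{x})\boldsymbol{u}$ with locally Lipschitz $\hat f,\hat g$ is given. $V:\mathcal{X}\to\mathbb{R}$ (a control Lyapunov function) and $h:\mathbb{R}^n\to\mathbb{R}$ (a control barrier function) are continuously differentiable, and their nominal time derivatives are $\hat{\dot V}(\boldsymbol{x},\boldsymbol{u})=L_{\hat f}V(\boldsymbol{x})+L_{\hat g}V(\boldsymbol{x})\boldsymbol{u}$ and $\hat{\dot h}(\boldsymbol{x},\boldsymbol{u})=L_{\hat f}h(\boldsymbol{x})+L_{\hat g}h(\boldsymbol{x})\boldsymbol{u}$ ($L$ denotes Lie derivative). Write $\boldsymbol{y}=[1,\boldsymbol{u}^T]^T\in\mathbb{R}^{m+1}$. Gaussian-process model: for each region $r$ and each of the two outputs (the CLF residual, superscript $V$, and the CBF residual, superscript $h$) a Gaussian process with zero prior mean and kernel $k_r((\boldsymbol{x},\boldsymbol{y}),(\boldsymbol{x}',\boldsymbol{y}'))=\boldsymbol{y}^T\Lambda_r(\boldsymbol{x},\boldsymbol{x}')\boldsymbol{y}'$,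 $\Lambda_r=\operatorname{diag}(k_r^1,\dots,k_r^{m+1})$ with positive-definite base kernels $k_r^i$ on $\mathcal{R}_r$ (chosen separately for the $V$ and $h$ outputs), is conditioned on data: $N_r$ input pairs $(\boldsymbol{x}_j,\boldsymbol{y}_j)$ with $\boldsymbol{x}_j\in\mathcal{R}_r$, collected as columns of $X_r\in\mathbb{R}^{n\times N_r}$, $Y_r\in\mathbb{R}^{(m+1)\times N_r}$, with output vector $\boldsymbol{\omega}_r\in\mathbb{R}^{N_r}$ ($\boldsymbol{\omega}_r^V$ or $\boldsymbol{\omega}_r^h$) and noise variance $\sigma_n^2>0$. With $K_r$ the Gram matrix of $k_r$ on the data and $\bar K_r=[\bar{\boldsymbol{k}}_r^1,\dots,\bar{\boldsymbol{k}}_r^{N_r}]\circ Y_r\in\mathbb{R}^{(m+1)\times N_r}$, $\bar{\boldsymbol{k}}_r^i=[k_r^1(\boldsymbol{x},\boldsymbol{x}_i),\dots,k_r^{m+1}(\boldsymbol{x},\boldsymbol{x}_i)]^T$ ($\circ$ = Hadamard product), the posterior mean and variance at $(\boldsymbol{x},\boldsymbol{y})$ are $m_r=\boldsymbol{\omega}_r^T(K_r+\sigma_n^2I)^{-1}\bar K_r^T\boldsymbol{y}$ and $\sigma_r^2=\boldsymbol{y}^T\big(\Lambda_r(\boldsymbol{x},\boldsymbol{x})-\bar K_r(K_r+\sigma_n^2I)^{-1}\bar K_r^T\big)\boldsymbol{y}$, with $\sigma_r\ge0$ the standard deviation; applying this with the $V$-data/kernels gives $m_r^V,\sigma_r^V$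 and with the $h$-data/kernels gives $m_r^h,\sigma_r^h$. A class $\mathcal{K}$ function is a continuous strictly increasing $\alpha:[0,a)\to[0,\infty)$ with $\alpha(0)=0$. *)

(* Defs.v *)
From mathcomp Require Import all_boot all_order all_algebra.
From mathcomp Require Import all_classical all_reals all_analysis.
Set Implicit Arguments. Unset Strict Implicit. Unset Printing Implicit Defensive.
Import Order.TTheory GRing.Theory Num.Theory numFieldNormedType.Exports.
Local Open Scope classical_set_scope.
Local Open Scope ring_scope.

Section GPCBF.
Variable R : realType.

Definition norm2 (k : nat) (v : 'cV[R]_k) : R := Num.sqrt (\sum_(i < k) v i 0 ^+ 2).

Definition convex_cV (k : nat) (S : set 'cV[R]_k) : Prop :=
  forall a b (t : R), S a -> S b -> 0 <= t <= 1 -> S (t *: a + (1 - t) *: b).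

(** Locally Lipschitz map (norms are the max-norm of mathcomp-analysis,
    equivalent to any other norm in finite dimension). *)
Definition locally_lipschitz (p q k : nat) (f : 'cV[R]_p -> 'M[R]_(q, k)) : Prop :=
  forall x0 : 'cV[R]_p, exists e : R, 0 < e /\ exists L : R,
    forall a b : 'cV[R]_p, `|a - x0| < e -> `|b - x0| < e ->
      `|f a - f b| <= L * `|a - b|.

Definition C1_on (n : nat) (X : set 'cV[R]_n) (V : 'cV[R]_n -> R) : Prop :=
  (forall y, X y -> differentiable V y) /\
  (forall v : 'cV[R]_n, {within X, continuous (fun y => 'd V y v)}).

Definition lie_f (n : nat) (V : 'cV[R]_n -> R) (f : 'cV[R]_n -> 'cV[R]_n)
  (x : 'cV[R]_n) : R := 'd V x (f x).
Definition lie_g (n m : nat) (V : 'cV[R]_n -> R) (g : 'cV[R]_n -> 'M[R]_(n, m))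
  (x : 'cV[R]_n) : 'rV[R]_m := \row_(j < m) 'd V x (col j (g x)).

Definition pd_kernel_on (n : nat) (S : set 'cV[R]_n) (k : 'cV[R]_n -> 'cV[R]_n -> R) : Prop :=
  (forall a b, S a -> S b -> k a b = k b a) /\
  forall (N : nat) (pts : 'I_N -> 'cV[R]_n) (c : 'I_N -> R),
    (forall j, S (pts j)) ->
    0 <= \sum_(j < N) \sum_(l < N) c j * c l * k (pts j) (pts l).

(** Class K function alpha : [0, a) -> [0, oo), with a : \bar R (a = +oo allowed). *)
Definition classK_dom (a : \bar R) : set R := [set s | 0 <= s /\ (s%:E < a)%E].
Definition classK (a : \bar R) (alpha : R -> R) : Prop :=
  (0%:E < a)%E /\
  {within classK_dom a, continuous alpha} /\
  (forall s t, classK_dom a s -> classK_dom a t -> s < t -> alpha s < alpha t) /\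
  alpha 0 = 0 /\ (forall s, classK_dom a s -> 0 <= alpha s).

(** Gaussian-process posterior with kernel y^T Lambda(x,x') y'. *)
Section GP.
Variables (n m N : nat).
Variable kb : 'I_(1 + m) -> 'cV[R]_n -> 'cV[R]_n -> R.
Variable Xd : 'I_N -> 'cV[R]_n.                         (* columns of X_r *)
Variable Yd : 'M[R]_(1 + m, N).
Variable w : 'cV[R]_N.
Variable sn2 : R.

Definition yvec (u : 'cV[R]_m) : 'cV[R]_(1 + m) := col_mx (const_mx 1) u.

Definition Lam (x x' : 'cV[R]_n) : 'M[R]_(1 + m) := diag_mx (\row_i kb i x x').

Definition gram : 'M[R]_N :=
  \matrix_(j < N, l < N) ((col j Yd)^T *m Lam (Xd j) (Xd l) *m col l Yd) 0 0.

Definition Kbar (x : 'cV[R]_n) : 'M[R]_(1 + m, N) :=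
  \matrix_(i < 1 + m, j < N) (kb i x (Xd j) * Yd i j).

Definition gp_mean (x : 'cV[R]_n) (u : 'cV[R]_m) : R :=
  (w^T *m invmx (gram + sn2%:M) *m (Kbar x)^T *m yvec u) 0 0.

Definition gp_var (x : 'cV[R]_n) (u : 'cV[R]_m) : R :=
  ((yvec u)^T *m (Lam x x - Kbar x *m invmx (gram + sn2%:M) *m (Kbar x)^T)
     *m yvec u) 0 0.

Definition gp_sd (x : 'cV[R]_n) (u : 'cV[R]_m) : R := Num.sqrt (gp_var x u).
End GP.

Definition socp_feasible (nz nc : nat) (ki : 'I_nc -> nat)
  (M : forall i : 'I_nc, 'M[R]_(ki i, nz)) (nv : forall i : 'I_nc, 'cV[R]_(ki i))
  (p : 'I_nc -> 'cV[R]_nz) (q : 'I_nc -> R) (z : 'cV[R]_nz) : Prop :=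
  forall i : 'I_nc, norm2 (M i *m z + nv i) <= ((p i)^T *m z) 0 0 + q i.

(** The problem  min obj(u,d) s.t. feas(u,d)  is equivalent to a standard SOCP
    min f^T z s.t. SOC constraints: there is a linear recovery map
    z |-> (Pu z, Pd z) sending SOCP-feasible points to feasible points with no
    larger objective, and every feasible (u,d) is the image of an SOCP-feasible
    z with the same objective value.  (Hence equal optimal values and
    optimal solutions correspond.) *)
Definition socp_equivalent (m : nat) (obj : 'cV[R]_m -> R -> R)
  (feas : 'cV[R]_m -> R -> Prop) : Prop :=
  exists (nz nc : nat) (ki : 'I_nc -> nat)
    (M : forall i : 'I_nc, 'M[R]_(ki i, nz)) (nv : forall i : 'I_nc, 'cV[R]_(ki i))
    (p : 'I_nc -> 'cV[R]_nz) (q : 'I_nc -> R) (f : 'cV[R]_nz)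
    (Pu : 'M[R]_(m, nz)) (Pd : 'rV[R]_nz),
    (forall z, socp_feasible M nv p q z ->
       feas (Pu *m z) ((Pd *m z) 0 0) /\
       obj (Pu *m z) ((Pd *m z) 0 0) <= (f^T *m z) 0 0) /\
    (forall u d, feas u d ->
       exists z, socp_feasible M nv p q z /\ Pu *m z = u /\
                 (Pd *m z) 0 0 = d /\ (f^T *m z) 0 0 = obj u d).

Definition convex_problem (m : nat) (obj : 'cV[R]_m -> R -> R)
  (feas : 'cV[R]_m -> R -> Prop) : Prop :=
  (forall u1 d1 u2 d2 (t : R), 0 <= t <= 1 ->
     obj (t *: u1 + (1 - t) *: u2) (t * d1 + (1 - t) * d2)
       <= t * obj u1 d1 + (1 - t) * obj u2 d2) /\
  (forall u1 d1 u2 d2 (t : R), 0 <= t <= 1 -> feas u1 d1 -> feas u2 d2 ->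
     feas (t *: u1 + (1 - t) *: u2) (t * d1 + (1 - t) * d2)).

End GPCBF.

(* Main.v *)
Require Import Defs.
From mathcomp Require Import all_boot all_order all_algebra.
From mathcomp Require Import all_classical all_reals all_analysis.
From mathcomp Require Import ring lra.
Import Order.TTheory GRing.Theory Num.Theory numFieldNormedType.Exports.
Set Implicit Arguments. Unset Strict Implicit. Unset Printing Implicit Defensive.
Local Open Scope classical_set_scope.
Local Open Scope ring_scope.

Section N2.
Variable R : realType.

Lemma norm2_sq k (v : 'cV[R]_k) : norm2 v ^+ 2 = \sum_i v i 0 ^+ 2.
Proof. by rewrite /norm2 sqr_sqrtr // sumr_ge0 // => i _; exact: sqr_ge0. Qed.

Lemma norm2_ge0 k (v : 'cV[R]_k) : 0 <= norm2 v.
Proof. exact: sqrtr_ge0. Qed.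

Lemma norm2_eq k1 k2 (a : 'cV[R]_k1) (b : 'cV[R]_k2) :
  norm2 a ^+ 2 = norm2 b ^+ 2 -> norm2 a = norm2 b.
Proof.
move=> H; have ha := norm2_ge0 a; have hb := norm2_ge0 b.
by apply/eqP; rewrite -(@eqrXn2 _ 2) // H.
Qed.

Lemma norm2_col_mx k1 k2 (a : 'cV[R]_k1) (b : 'cV[R]_k2) :
  norm2 (col_mx a b) ^+ 2 = norm2 a ^+ 2 + norm2 b ^+ 2.
Proof.
rewrite !norm2_sq big_split_ord /=; congr (_ + _); apply: eq_bigr => i _.
  by rewrite col_mxEu. by rewrite col_mxEd.
Qed.

Lemma norm2_0 k : norm2 (0 : 'cV[R]_k) = 0.
Proof. by rewrite /norm2 big1 ?sqrtr0 // => i _; rewrite mxE expr0n. Qed.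

Lemma norm2_col_mx0 k1 k2 (a : 'cV[R]_k1) :
  norm2 (col_mx a (0 : 'cV[R]_k2)) = norm2 a.
Proof. by apply: norm2_eq; rewrite norm2_col_mx norm2_0 expr0n addr0. Qed.

Lemma norm2_col_0mx k1 k2 (a : 'cV[R]_k1) :
  norm2 (col_mx (0 : 'cV[R]_k2) a) = norm2 a.
Proof. by apply: norm2_eq; rewrite norm2_col_mx norm2_0 expr0n add0r. Qed.

Lemma norm2_scale k (t : R) (a : 'cV[R]_k) : 0 <= t -> norm2 (t *: a) = t * norm2 a.
Proof.
move=> t0; apply/eqP; rewrite -(@eqrXn2 _ 2) // ?mulr_ge0 ?norm2_ge0 //.
rewrite exprMn !norm2_sq mulr_sumr.
by apply/eqP; apply: eq_bigr => i _; rewrite mxE exprMn.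
Qed.

Lemma sum_prod (I : finType) (f g : I -> R) :
  (\sum_i f i) * (\sum_j g j) = \sum_i \sum_j f i * g j.
Proof. by rewrite mulr_suml; apply: eq_bigr => i _; rewrite mulr_sumr. Qed.

Lemma cauchy_schwarz k (a b : 'I_k -> R) :
  (\sum_i a i * b i) ^+ 2 <= (\sum_i a i ^+ 2) * (\sum_i b i ^+ 2).
Proof.
have H : \sum_i \sum_j (a i * b j - a j * b i) ^+ 2 =
   2 * ((\sum_i a i ^+ 2) * (\sum_i b i ^+ 2) - (\sum_i a i * b i) ^+ 2).
  rewrite expr2 !sum_prod.
  have E : forall i j, (a i * b j - a j * b i) ^+ 2 =
     a i ^+ 2 * b j ^+ 2 + a j ^+ 2 * b i ^+ 2 - 2 * ((a i * b i) * (a j * b j)).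
    by move=> i j; ring.
  under eq_bigr do under eq_bigr do rewrite E.
  rewrite (eq_bigr (fun i => \sum_j a i ^+ 2 * b j ^+ 2 + \sum_j a j ^+ 2 * b i ^+ 2
      - 2 * \sum_j (a i * b i) * (a j * b j))); last first.
    move=> i _; rewrite sumrB big_split /= mulr_sumr //.
  rewrite sumrB big_split /= -mulr_sumr.
  rewrite [X in _ + X - _]exchange_big /=.
  have -> : \sum_j \sum_i a j ^+ 2 * b i ^+ 2 = \sum_i \sum_j a i ^+ 2 * b j ^+ 2.
    by rewrite exchange_big.
  ring.
have : 0 <= \sum_i \sum_j (a i * b j - a j * b i) ^+ 2.
  by apply: sumr_ge0 => i _; apply: sumr_ge0 => j _; exact: sqr_ge0.
rewrite H; lra.
Qed.

Lemma norm2_triangle k (a b : 'cV[R]_k) : norm2 (a + b) <= norm2 a + norm2 b.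
Proof.
have ha := norm2_ge0 a; have hb := norm2_ge0 b; have hab := norm2_ge0 (a + b).
have cs := cauchy_schwarz (fun i => a i 0) (fun i => b i 0).
rewrite -!norm2_sq in cs.
have E : norm2 (a + b) ^+ 2 = norm2 a ^+ 2 + 2 * (\sum_i a i 0 * b i 0) + norm2 b ^+ 2.
  rewrite !norm2_sq mulr_sumr -!big_split /=; apply: eq_bigr => i _; rewrite mxE; ring.
move: cs E; set s := \sum_i _ => cs E.
have : s <= norm2 a * norm2 b.
  have p0 : 0 <= norm2 a * norm2 b by rewrite mulr_ge0.
  rewrite -exprMn in cs; move: p0 cs; set p := norm2 a * norm2 b => p0 cs.
  nra.
nra.
Qed.

End N2.
Section SOS.
Variable R : realType.

Definition Qf k (a : 'I_k -> 'I_k -> R) (y : 'I_k -> R) :=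
  \sum_i \sum_j y i * y j * a i j.

Definition SOSf k (l : 'I_k -> 'I_k -> R) (y : 'I_k -> R) :=
  \sum_r (\sum_j l r j * y j) ^+ 2.

Definition ext k (s : R) (y : 'I_k -> R) : 'I_k.+1 -> R :=
  fun i => if unlift ord0 i is Some j then y j else s.

Lemma ext0 k s (y : 'I_k -> R) : ext s y ord0 = s.
Proof. by rewrite /ext unlift_none. Qed.

Lemma extl k s (y : 'I_k -> R) j : ext s y (lift ord0 j) = y j.
Proof. by rewrite /ext liftK. Qed.


Lemma Qf_rec k (a : 'I_k.+1 -> 'I_k.+1 -> R) y :
  (forall i j, a i j = a j i) ->
  Qf a y = y ord0 ^+ 2 * a ord0 ord0
     + 2 * y ord0 * (\sum_j y (lift ord0 j) * a ord0 (lift ord0 j))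
     + Qf (fun i j => a (lift ord0 i) (lift ord0 j)) (fun i => y (lift ord0 i)).
Proof.
move=> sym; rewrite /Qf big_ord_recl big_ord_recl.
under [X in _ + X]eq_bigr do rewrite big_ord_recl.

rewrite big_split /=.
have -> : \sum_(i < k) y (lift ord0 i) * y ord0 * a (lift ord0 i) ord0
   = \sum_(i < k) y ord0 * y (lift ord0 i) * a ord0 (lift ord0 i).
  by apply: eq_bigr => i _; rewrite (sym (lift ord0 i)); ring.
have -> : \sum_(i < k) y ord0 * y (lift ord0 i) * a ord0 (lift ord0 i)
   = y ord0 * \sum_(i < k) y (lift ord0 i) * a ord0 (lift ord0 i).
  by rewrite mulr_sumr; apply: eq_bigr => i _; rewrite mulrA.
ring.
Qed.

Lemma Qf_ext k (a : 'I_k.+1 -> 'I_k.+1 -> R) s y :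
  (forall i j, a i j = a j i) ->
  Qf a (ext s y) = s ^+ 2 * a ord0 ord0
     + 2 * s * (\sum_j y j * a ord0 (lift ord0 j))
     + Qf (fun i j => a (lift ord0 i) (lift ord0 j)) y.
Proof.
move=> sym; rewrite Qf_rec // ext0.
by under eq_bigr do rewrite extl; under [Qf _ _]eq_bigr do under eq_bigr do rewrite !extl.
Qed.

Lemma SOSf_ext k (l : 'I_k.+1 -> 'I_k.+1 -> R) y :
  SOSf l y = (\sum_j l ord0 j * y j) ^+ 2 +
    \sum_(r < k) (l (lift ord0 r) ord0 * y ord0 +
       \sum_(j < k) l (lift ord0 r) (lift ord0 j) * y (lift ord0 j)) ^+ 2.
Proof.
rewrite /SOSf big_ord_recl; congr (_ + _); apply: eq_bigr => r _.
by rewrite big_ord_recl.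
Qed.

Lemma sos k (a : 'I_k -> 'I_k -> R) :
  (forall i j, a i j = a j i) -> (forall y, 0 <= Qf a y) ->
  exists l : 'I_k -> 'I_k -> R, forall y, Qf a y = SOSf l y.
Proof.
elim: k a => [|k IH] a sym psd.
  by exists (fun _ _ => 0) => y; rewrite /Qf /SOSf !big_ord0.
set a00 := a ord0 ord0.
set b := fun j => a ord0 (lift ord0 j).
set a' := fun i j => a (lift ord0 i) (lift ord0 j).
have Qe : forall s y, Qf a (ext s y) = s ^+ 2 * a00 + 2 * s * (\sum_j y j * b j) + Qf a' y.
  by move=> s y; rewrite Qf_ext.
have a00ge : 0 <= a00.
  have := psd (ext 1 (fun _ => 0)); rewrite Qe.
  have -> : Qf a' (fun _ => 0) = 0.
    by rewrite /Qf big1 // => i _; rewrite big1 // => j _; rewrite !mul0r.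
  rewrite big1; last by move=> i _; rewrite mul0r.
  by rewrite !mulr0 !addr0 expr1n mul1r.
have Qy : forall y : 'I_k.+1 -> R, y = ext (y ord0) (fun j => y (lift ord0 j)).
  move=> y; apply: funext => i; rewrite /ext; case: unliftP => [j ->|-> //].
  by [].
have [a0|a0pos] := eqVneq a00 0.
  have Bz : forall y, \sum_j y j * b j = 0.
    move=> y; apply/eqP; apply/negPn/negP => Bn.
    set B := \sum_j y j * b j in Bn.
    have := psd (ext (- (Qf a' y + 1) / (2 * B)) y); rewrite Qe a0 mulr0 add0r.
    rewrite -/B. have -> : 2 * (- (Qf a' y + 1) / (2 * B)) * B = - (Qf a' y + 1).
      by field; rewrite Bn.
    lra.
  have psd' : forall y, 0 <= Qf a' y.
    by move=> y; have := psd (ext 0 y); rewrite Qe a0 Bz; lra.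
  have [l' Hl'] := IH a' (fun i j => sym _ _) psd'.
  exists (fun r j => if unlift ord0 r is Some r' then
                       (if unlift ord0 j is Some j' then l' r' j' else 0) else 0).
  move=> y; rewrite [in LHS](Qy y) Qe a0 Bz Hl' SOSf_ext.
  rewrite big1; last by move=> j _; rewrite unlift_none mul0r.
  rewrite expr0n /= add0r mulr0 !add0r /SOSf mulr0 add0r; apply: eq_bigr => r _.
  rewrite liftK unlift_none mul0r add0r; congr (_ ^+ 2); apply: eq_bigr => j _.
  by rewrite liftK.
have apos : 0 < a00 by rewrite lt_neqAle eq_sym a0pos.
set a'' := fun i j => a' i j - b i * b j / a00.
have Q'' : forall y, Qf a'' y = Qf a' y - (\sum_j y j * b j) ^+ 2 / a00.
  move=> y; rewrite /Qf expr2 sum_prod mulr_suml -sumrB; apply: eq_bigr => i _.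
  rewrite mulr_suml -sumrB; apply: eq_bigr => j _; rewrite /a''; ring.
have psd'' : forall y, 0 <= Qf a'' y.
  move=> y; have := psd (ext (- (\sum_j y j * b j) / a00) y).
  rewrite Qe Q''; set B := \sum_j y j * b j.
  have -> : (- B / a00) ^+ 2 * a00 + 2 * (- B / a00) * B = - (B ^+ 2 / a00).
    by field; rewrite a0pos.
  lra.
have sym'' : forall i j, a'' i j = a'' j i.
  by move=> i j; rewrite /a'' /a' (sym (lift ord0 i)) (mulrC (b i)).
have [l' Hl'] := IH a'' sym'' psd''.
set sq := Num.sqrt a00.
have sq2 : sq ^+ 2 = a00 by rewrite sqr_sqrtr.
have sqn0 : sq != 0 by rewrite sqrtr_eq0 -ltNge.
exists (fun r j => if unlift ord0 r is Some r' then
                   (if unlift ord0 j is Some j' then l' r' j' else 0)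
                 else (if unlift ord0 j is Some j' then b j' / sq else sq)).
move=> y; rewrite [in LHS](Qy y) Qe.
rewrite SOSf_ext big_ord_recl unlift_none.
rewrite [X in _ = (_ + X) ^+ 2 + _](eq_bigr (fun i => b i / sq * y (lift ord0 i)));
  last by move=> i _; rewrite liftK.
rewrite [X in _ = _ + X](eq_bigr (fun r => (\sum_j l' r j * y (lift ord0 j)) ^+ 2)); last first.
  move=> r _; rewrite liftK mul0r add0r; congr (_ ^+ 2); apply: eq_bigr => j _.
  by rewrite liftK.
have -> : forall F : 'I_k -> R, \sum_r (\sum_j l' r j * F j) ^+ 2 = SOSf l' F by [].
rewrite -Hl' Q''.
have -> : \sum_(i < k) b i / sq * y (lift ord0 i) = (\sum_j y (lift ord0 j) * b j) / sq.
  by rewrite mulr_suml; apply: eq_bigr => i _; rewrite mulrC mulrA.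
set B := \sum_j _; rewrite -sq2; field.
by [].
Qed.
End SOS.

Section MX.
Variable R : realType.

Lemma qform_sum k (A : 'M[R]_k) (y : 'cV[R]_k) :
  (y^T *m A *m y) 0 0 = \sum_i \sum_j y i 0 * y j 0 * A i j.
Proof.
rewrite mxE (eq_bigr (fun j => \sum_i y i 0 * y j 0 * A i j)); first by rewrite exchange_big.
move=> j _; rewrite mxE mulr_suml; apply: eq_bigr => i _; rewrite !mxE; ring.
Qed.

Lemma psd_factor k (A : 'M[R]_k) :
  (forall y : 'cV[R]_k, 0 <= (y^T *m A *m y) 0 0) ->
  exists L : 'M[R]_k, forall y, (y^T *m A *m y) 0 0 = norm2 (L *m y) ^+ 2.
Proof.
move=> psd.
set a := fun i j => (A i j + A j i) / 2.
have Qa : forall y : 'cV[R]_k, (y^T *m A *m y) 0 0 = Qf a (fun i => y i 0).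
  move=> y; rewrite qform_sum /Qf /a.
  have -> : \sum_i \sum_j y i 0 * y j 0 * ((A i j + A j i) / 2) =
      (\sum_i \sum_j y i 0 * y j 0 * A i j + \sum_i \sum_j y j 0 * y i 0 * A j i) / 2.
    rewrite -big_split mulr_suml; apply: eq_bigr => i _.
    rewrite -big_split mulr_suml; apply: eq_bigr => j _ /=; ring.
  rewrite [X in (_ + X) / 2]exchange_big /=; by field.
have [l Hl] : exists l : 'I_k -> 'I_k -> R, forall y, Qf a y = SOSf l y.
  apply: sos; first by move=> i j; rewrite /a addrC.
  move=> y; have := psd (\col_i y i); rewrite Qa.
  by under eq_fun do rewrite mxE.
exists (\matrix_(r, j) l r j) => y; rewrite Qa Hl norm2_sq /SOSf.
apply: eq_bigr => r _; rewrite mxE; congr (_ ^+ 2); apply: eq_bigr => j _.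
by rewrite mxE.
Qed.
End MX.

Section GPS.
Variable R : realType.

Lemma bilin_sum k1 k2 (A : 'M[R]_(k1, k2)) (y : 'cV[R]_k1) (c : 'cV[R]_k2) :
  (y^T *m A *m c) 0 0 = \sum_i \sum_j y i 0 * c j 0 * A i j.
Proof.
rewrite mxE (eq_bigr (fun j => \sum_i y i 0 * c j 0 * A i j)); first by rewrite exchange_big.
move=> j _; rewrite mxE mulr_suml; apply: eq_bigr => i _; rewrite !mxE; ring.
Qed.

Lemma diag_form k (d : 'rV[R]_k) (a b : 'cV[R]_k) :
  (a^T *m diag_mx d *m b) 0 0 = \sum_i a i 0 * d 0 i * b i 0.
Proof. by rewrite mul_mx_diag mxE; apply: eq_bigr => i _; rewrite !mxE. Qed.

Lemma kernel_form n (S : set 'cV[R]_n) (k : 'cV[R]_n -> 'cV[R]_n -> R) N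
  (x0 : 'cV[R]_n) (p : 'I_N -> 'cV[R]_n) (a : R) (c : 'I_N -> R) :
  pd_kernel_on S k -> S x0 -> (forall j, S (p j)) ->
  0 <= a ^+ 2 * k x0 x0 + 2 * a * (\sum_j c j * k x0 (p j))
       + \sum_j \sum_l c j * c l * k (p j) (p l).
Proof.
move=> [ksym kpd] Sx Sp.
set pts : 'I_N.+1 -> 'cV[R]_n := fun i => if unlift ord0 i is Some j then p j else x0.
have Spts : forall i, S (pts i) by move=> i; rewrite /pts; case: unlift.
have H := kpd N.+1 pts (ext a c) Spts.
have E : \sum_(j < N.+1) \sum_(l < N.+1) ext a c j * ext a c l * k (pts j) (pts l)
   = Qf (fun i j => k (pts i) (pts j)) (ext a c) by [].
rewrite E Qf_ext in H; last by move=> i j; rewrite ksym.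
have P0 : pts ord0 = x0 by rewrite /pts unlift_none.
have Pl : forall j, pts (lift ord0 j) = p j by move=> j; rewrite /pts liftK.
rewrite P0 in H.
rewrite (eq_bigr (fun j => c j * k x0 (p j))) in H; last by move=> j _; rewrite Pl.
rewrite /Qf [X in _ + X](eq_bigr (fun j => \sum_l c j * c l * k (p j) (p l))) in H; first exact: H.
by move=> j _; apply: eq_bigr => l _; rewrite !Pl.
Qed.

Variables (n m N : nat) (kb : 'I_(1 + m) -> 'cV[R]_n -> 'cV[R]_n -> R).
Variables (Xd : 'I_N -> 'cV[R]_n) (Yd : 'M[R]_(1 + m, N)) (sn2 : R) (Rr : set 'cV[R]_n).
Variable x : 'cV[R]_n.
Hypothesis kpd : forall i, pd_kernel_on Rr (kb i).
Hypothesis Rx : Rr x.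
Hypothesis RXd : forall j, Rr (Xd j).
Hypothesis sn2pos : 0 < sn2.

Lemma P_nonneg (y : 'cV[R]_(1 + m)) (c : 'cV[R]_N) :
  0 <= (y^T *m Lam kb x x *m y) 0 0 + 2 * (y^T *m Kbar kb Xd Yd x *m c) 0 0
       + (c^T *m gram kb Xd Yd *m c) 0 0.
Proof.
have -> : (y^T *m Lam kb x x *m y) 0 0 + 2 * (y^T *m Kbar kb Xd Yd x *m c) 0 0
       + (c^T *m gram kb Xd Yd *m c) 0 0 =
   \sum_i (y i 0 ^+ 2 * kb i x x + 2 * y i 0 * (\sum_j (Yd i j * c j 0) * kb i x (Xd j))
       + \sum_j \sum_l (Yd i j * c j 0) * (Yd i l * c l 0) * kb i (Xd j) (Xd l)).
  rewrite /Lam diag_form !bilin_sum !big_split /= mulr_sumr.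
  congr (_ + _ + _).
  - by apply: eq_bigr => i _; rewrite mxE; ring.
  - apply: eq_bigr => i _; rewrite !mulr_sumr; apply: eq_bigr => j _; rewrite mxE; ring.
  - rewrite [RHS]exchange_big /=; apply: eq_bigr => j _.
    rewrite [RHS]exchange_big /=; apply: eq_bigr => l _.
    rewrite mxE diag_form mulr_sumr; apply: eq_bigr => i _; rewrite !mxE; ring.
apply: sumr_ge0 => i _.
exact: (@kernel_form _ _ _ _ x Xd (y i 0) (fun j => Yd i j * c j 0) (kpd i) Rx RXd).
Qed.

Definition Cm := gram kb Xd Yd + sn2%:M.

Lemma Cm_form (c : 'cV[R]_N) :
  (c^T *m Cm *m c) 0 0 = (c^T *m gram kb Xd Yd *m c) 0 0 + sn2 * \sum_j c j 0 ^+ 2.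
Proof.
rewrite /Cm mulmxDr mulmxDl [LHS]mxE; congr (_ + _).
rewrite mul_mx_scalar -scalemxAl mxE mxE ; congr (_ * _); apply: eq_bigr => j _.
by rewrite !mxE expr2.
Qed.

Lemma gram_nonneg (c : 'cV[R]_N) : 0 <= (c^T *m gram kb Xd Yd *m c) 0 0.
Proof.
have := P_nonneg 0 c.
by rewrite trmx0 !mul0mx mxE mxE mulr0 !add0r.
Qed.

Lemma Cm_unit : Cm \in unitmx.
Proof.
have zero : forall v : 'rV[R]_N, v *m Cm = 0 -> v = 0.
  move=> v vC.
  have : (v^T^T *m Cm *m v^T) 0 0 = 0 by rewrite trmxK vC mul0mx mxE.
  rewrite Cm_form => H.
  have g0 := gram_nonneg v^T.
  have s0 : 0 <= \sum_j v^T j 0 ^+ 2 by apply: sumr_ge0 => j _; exact: sqr_ge0.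
  have s00 : \sum_j v^T j 0 ^+ 2 = 0.
    have h1 : sn2 * \sum_j v^T j 0 ^+ 2 = 0.
      have [G HG] : exists G : R, G = ((v^T)^T *m gram kb Xd Yd *m v^T) 0 0 by eexists.
      rewrite -HG in H g0; have : 0 <= sn2 * \sum_j v^T j 0 ^+ 2 by rewrite mulr_ge0 // ltW.
      lra.
    by move: h1 => /eqP; rewrite mulf_eq0 gt_eqF //= => /eqP.
  apply/rowP => j.
  have := @psumr_eq0P _ _ xpredT (fun i => v^T i 0 ^+ 2) (fun i _ => sqr_ge0 _) s00 j isT.
  by move=> /eqP; rewrite sqrf_eq0 mxE => /eqP ->; rewrite mxE.
rewrite -row_free_unit -kermx_eq0; apply/eqP/row_matrixP => i; rewrite row0.
have KC : kermx Cm *m Cm = 0 by apply/sub_kermxP; exact: submx_refl.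
by apply: zero; rewrite -row_mul KC row0.
Qed.

Definition Sm := Lam kb x x - Kbar kb Xd Yd x *m invmx Cm *m (Kbar kb Xd Yd x)^T.

Lemma gp_var_Sm (u : 'cV[R]_m) : gp_var kb Xd Yd sn2 x u = ((yvec u)^T *m Sm *m yvec u) 0 0.
Proof. by []. Qed.

Lemma scal_tr (A : 'M[R]_(1, 1)) : A 0 0 = A^T 0 0.
Proof. by rewrite mxE. Qed.

Lemma mx00B (A B : 'M[R]_(1, 1)) : (A - B) 0 0 = A 0 0 - B 0 0.
Proof. by rewrite !mxE. Qed.
Lemma mx00N (A : 'M[R]_(1, 1)) : (- A) 0 0 = - A 0 0.
Proof. by rewrite !mxE. Qed.

Lemma trN p q (A : 'M[R]_(p, q)) : (- A)^T = - A^T.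
Proof. by apply/matrixP => i j; rewrite !mxE. Qed.

Lemma aux_ineq (L G s : R) : 0 <= L + 2 * -(G + s) + G -> 0 <= s -> 0 <= L - (G + s).
Proof. lra. Qed.

Lemma Sm_psd (y : 'cV[R]_(1 + m)) : 0 <= (y^T *m Sm *m y) 0 0.
Proof.
set K := Kbar kb Xd Yd x; set iC := invmx Cm.
set v := K^T *m y; set c := - (iC *m v).
have vT : v^T = y^T *m K by rewrite /v trmx_mul trmxK.
have e1 : (y^T *m Sm *m y) 0 0 = (y^T *m Lam kb x x *m y) 0 0 - (v^T *m iC *m v) 0 0.
  rewrite /Sm mulmxBr mulmxBl mx00B vT /v; congr (_ - _).
  by rewrite !mulmxA.
have e2 : (y^T *m K *m c) 0 0 = - (v^T *m iC *m v) 0 0.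
  by rewrite /c mulmxN mx00N vT !mulmxA.
have e3 : (c^T *m Cm *m c) 0 0 = (v^T *m iC *m v) 0 0.
  rewrite /c trN mulNmx mulmxN mulNmx opprK trmx_mul.
  rewrite -!mulmxA (mulmxA Cm) mulmxV ?Cm_unit // mul1mx.
  rewrite scal_tr !trmx_mul trmxK mulmxA.
  by rewrite /v !trmxK !mulmxA.
rewrite Cm_form in e3.
have hP := P_nonneg y c.
have hs : 0 <= sn2 * \sum_j c j 0 ^+ 2.
  apply: mulr_ge0; first exact: ltW.
  by apply: sumr_ge0 => j _; exact: sqr_ge0.
rewrite -/K e2 -e3 in hP; rewrite e1 -e3.
exact: (aux_ineq hP hs).
Qed.
End GPS.

Section ABS.
Variable R : realType.
Variable m : nat.
Variables (r1 r2 : 'rV[R]_(1 + m)) (B1 B2 : 'M[R]_(1 + m)) (c1 c2 rho : R).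
Hypothesis rhopos : 0 < rho.

Definition objA (u : 'cV[R]_m) (d : R) := norm2 u ^+ 2 + rho * d ^+ 2.
Definition feasA (u : 'cV[R]_m) (d : R) :=
  c1 + (r1 *m yvec u) 0 0 + norm2 (B1 *m yvec u) <= d /\
  norm2 (B2 *m yvec u) <= c2 + (r2 *m yvec u) 0 0.

Lemma conv_sq (t a b : R) : 0 <= t <= 1 ->
  (t * a + (1 - t) * b) ^+ 2 <= t * a ^+ 2 + (1 - t) * b ^+ 2.
Proof.
move=> /andP [t0 t1].
have : 0 <= t * (1 - t) * (a - b) ^+ 2.
  by apply: mulr_ge0; [apply: mulr_ge0 => //; rewrite subr_ge0 | exact: sqr_ge0].
have E : t * a ^+ 2 + (1 - t) * b ^+ 2 - (t * a + (1 - t) * b) ^+ 2 = t * (1 - t) * (a - b) ^+ 2.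
  by ring.
lra.
Qed.

Lemma yvec_conv (t : R) (u1 u2 : 'cV[R]_m) :
  yvec (t *: u1 + (1 - t) *: u2) = t *: yvec u1 + (1 - t) *: yvec u2.
Proof.
rewrite /yvec !scale_col_mx add_col_mx; congr col_mx.
by apply/matrixP => i j; rewrite !mxE; ring.
Qed.

Lemma norm2_conv k (B : 'M[R]_(k, 1 + m)) (t : R) (y1 y2 : 'cV[R]_(1 + m)) : 0 <= t <= 1 ->
  norm2 (B *m (t *: y1 + (1 - t) *: y2)) <= t * norm2 (B *m y1) + (1 - t) * norm2 (B *m y2).
Proof.
move=> /andP [t0 t1].
rewrite mulmxDr -!scalemxAr -(norm2_scale (B *m y1) t0) -(norm2_scale (B *m y2) (_ : 0 <= 1 - t)) ?subr_ge0 //.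
exact: norm2_triangle.
Qed.

Lemma lin_conv (r : 'rV[R]_(1 + m)) (t : R) (y1 y2 : 'cV[R]_(1 + m)) :
  (r *m (t *: y1 + (1 - t) *: y2)) 0 0 = t * (r *m y1) 0 0 + (1 - t) * (r *m y2) 0 0.
Proof. by rewrite mulmxDr -!scalemxAr !mxE. Qed.

Lemma convexA : convex_problem objA feasA.
Proof.
split.
  move=> u1 d1 u2 d2 t ht; rewrite /objA.
  have h1 : norm2 (t *: u1 + (1 - t) *: u2) ^+ 2 <= t * norm2 u1 ^+ 2 + (1 - t) * norm2 u2 ^+ 2.
    rewrite !norm2_sq !mulr_sumr -big_split /=; apply: ler_sum => i _.
    rewrite !mxE; exact: conv_sq.
  have h2 := conv_sq d1 d2 ht.
  have h3 : rho * (t * d1 + (1 - t) * d2) ^+ 2 <= rho * (t * d1 ^+ 2 + (1 - t) * d2 ^+ 2).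
    by rewrite ler_pM2l.
  move: h1 h3; set A := norm2 _ ^+ 2; set N1 := norm2 u1 ^+ 2; set N2 := norm2 u2 ^+ 2.
  move=> h1 h3; have := h3; nra.
move=> u1 d1 u2 d2 t ht [f11 f12] [f21 f22]; rewrite /feasA yvec_conv !lin_conv.
have n1 := norm2_conv B1 (yvec u1) (yvec u2) ht.
have n2 := norm2_conv B2 (yvec u1) (yvec u2) ht.
move/andP: ht => [t0 t1].
have t1' : 0 <= 1 - t by rewrite subr_ge0.
split.
  move: n1 f11 f21; set a1 := (r1 *m _) 0 0; set a2 := (r1 *m _) 0 0.
  set N1 := norm2 (B1 *m yvec u1); set N2 := norm2 (B1 *m yvec u2); set N := norm2 _.
  move=> n1 f11 f21; nra.
move: n2 f12 f22; set a1 := (r2 *m _) 0 0; set a2 := (r2 *m _) 0 0.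
set N1 := norm2 (B2 *m yvec u1); set N2 := norm2 (B2 *m yvec u2); set N := norm2 _.
move=> n2 f12 f22; nra.
Qed.

Definition Pu : 'M[R]_(m, m + 2) := row_mx 1%:M 0.
Definition Pd : 'rV[R]_(m + 2) := row_mx 0 (delta_mx 0 ord0).
Definition Ps : 'rV[R]_(m + 2) := row_mx 0 (delta_mx 0 ord_max).

Lemma Pu_col (u : 'cV[R]_m) (w : 'cV[R]_2) : Pu *m col_mx u w = u.
Proof. by rewrite /Pu mul_row_col mul1mx mul0mx addr0. Qed.
Lemma Pd_col (u : 'cV[R]_m) (w : 'cV[R]_2) : (Pd *m col_mx u w) 0 0 = w ord0 0.
Proof. by rewrite /Pd mul_row_col mul0mx add0r -rowE mxE. Qed.
Lemma Ps_col (u : 'cV[R]_m) (w : 'cV[R]_2) : (Ps *m col_mx u w) 0 0 = w ord_max 0.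
Proof. by rewrite /Ps mul_row_col mul0mx add0r -rowE mxE. Qed.

Lemma By k (B : 'M[R]_(k, 1 + m)) (u : 'cV[R]_m) :
  B *m yvec u = lsubmx B *m (const_mx 1 : 'cV[R]_1) + rsubmx B *m u.
Proof. by rewrite -{1}[B]hsubmxK /yvec mul_row_col. Qed.

Lemma norm2_1 (v : 'cV[R]_1) : norm2 v ^+ 2 = v 0 0 ^+ 2.
Proof. by rewrite norm2_sq big_ord1. Qed.

Lemma norm2_le (k : nat) (v : 'cV[R]_k) (a : R) :
  (norm2 v <= a) <-> (norm2 v ^+ 2 <= a ^+ 2 /\ 0 <= a).
Proof.
have h := norm2_ge0 v; split.
  move=> H; have a0 : 0 <= a by apply: le_trans H.
  by split => //; rewrite ler_sqr.
by move=> [H a0]; rewrite -ler_sqr.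
Qed.

Lemma mx00Z (a : R) (A : 'M[R]_(1, 1)) : (a *: A) 0 0 = a * A 0 0.
Proof. by rewrite mxE. Qed.
Lemma mx00B' (A B : 'M[R]_(1, 1)) : (A - B) 0 0 = A 0 0 - B 0 0.
Proof. by rewrite !mxE. Qed.
Lemma mxc1 : (const_mx 1 : 'cV[R]_1) 0 0 = 1.
Proof. by rewrite mxE. Qed.

Definition KK := ((1 + m) + (m + (1 + 1)))%N.

Definition M1 : 'M[R]_(KK, m + 2) := col_mx (rsubmx B1 *m Pu) 0.
Definition n1 : 'cV[R]_KK := col_mx (lsubmx B1 *m (const_mx 1 : 'cV[R]_1)) 0.
Definition p1 : 'cV[R]_(m + 2) := (Pd - rsubmx r1 *m Pu)^T.
Definition q1 : R := - (lsubmx r1 *m (const_mx 1 : 'cV[R]_1)) 0 0 - c1.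
Definition M2 : 'M[R]_(KK, m + 2) := col_mx (rsubmx B2 *m Pu) 0.
Definition n2 : 'cV[R]_KK := col_mx (lsubmx B2 *m (const_mx 1 : 'cV[R]_1)) 0.
Definition p2 : 'cV[R]_(m + 2) := (rsubmx r2 *m Pu)^T.
Definition q2 : R := (lsubmx r2 *m (const_mx 1 : 'cV[R]_1)) 0 0 + c2.
Definition M3 : 'M[R]_(KK, m + 2) :=
  col_mx 0 (col_mx (2 *: Pu) (col_mx ((2 * Num.sqrt rho) *: Pd) Ps)).
Definition n3 : 'cV[R]_KK := col_mx 0 (col_mx 0 (col_mx 0 (- (const_mx 1 : 'cV[R]_1)))).
Definition p3 : 'cV[R]_(m + 2) := Ps^T.
Definition q3 : R := 1.

Lemma rowy (r : 'rV[R]_(1 + m)) u : (r *m yvec u) 0 0 = (lsubmx r *m (const_mx 1 : 'cV[R]_1)) 0 0 + (rsubmx r *m u) 0 0.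
Proof. by rewrite By mxE. Qed.

Lemma soc1 z : (norm2 (M1 *m z + n1) <= (p1^T *m z) 0 0 + q1) <->
  (c1 + (r1 *m yvec (Pu *m z)) 0 0 + norm2 (B1 *m yvec (Pu *m z)) <= (Pd *m z) 0 0).
Proof.
rewrite /M1 /n1 /p1 /q1 mul_col_mx mul0mx add_col_mx addr0 norm2_col_mx0 trmxK.
rewrite (By B1) (rowy r1) mulmxBl mx00B -!mulmxA [rsubmx B1 *m _ + _]addrC.
split; lra.
Qed.

Lemma soc2 z : (norm2 (M2 *m z + n2) <= (p2^T *m z) 0 0 + q2) <->
  (norm2 (B2 *m yvec (Pu *m z)) <= c2 + (r2 *m yvec (Pu *m z)) 0 0).
Proof.
rewrite /M2 /n2 /p2 /q2 mul_col_mx mul0mx add_col_mx addr0 norm2_col_mx0 trmxK.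
rewrite (By B2) (rowy r2) -!mulmxA [rsubmx B2 *m _ + _]addrC.
split; lra.
Qed.

Lemma soc3 z : (norm2 (M3 *m z + n3) <= (p3^T *m z) 0 0 + q3) <->
  (objA (Pu *m z) ((Pd *m z) 0 0) <= (Ps *m z) 0 0).
Proof.
rewrite /M3 /n3 /p3 /q3 trmxK !mul_col_mx !mul0mx !add_col_mx !add0r !addr0 norm2_col_0mx.
rewrite norm2_le !norm2_col_mx !norm2_1 -!scalemxAl norm2_scale ?ler0n // mx00Z mx00B mxc1 /objA.
have hr := sqr_sqrtr (ltW rhopos).
have hn := norm2_ge0 (Pu *m z).
move: hr hn; set s := Num.sqrt rho; set N := norm2 _; set d := (Pd *m z) 0 0; set S := (Ps *m z) 0 0.
move=> hr hn.
have E : (2 * N) ^+ 2 + ((2 * s * d) ^+ 2 + (S - 1) ^+ 2) =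
   4 * (N ^+ 2 + rho * d ^+ 2) + (S - 1) ^+ 2 by rewrite -hr; ring.
rewrite E; split.
  move=> [H1 H2]; nra.
move=> H; have H0 : 0 <= rho * d ^+ 2 by apply: mulr_ge0; [exact: ltW | exact: sqr_ge0].
split; nra.
Qed.

Lemma socpA : socp_equivalent objA feasA.
Proof.
pose ki := fun _ : 'I_3 => KK.
pose M : forall i : 'I_3, 'M[R]_(ki i, m + 2) :=
  fun i => if val i == 0%N then M1 else if val i == 1%N then M2 else M3.
pose nv : forall i : 'I_3, 'cV[R]_(ki i) :=
  fun i => if val i == 0%N then n1 else if val i == 1%N then n2 else n3.
pose p := fun i : 'I_3 => if val i == 0%N then p1 else if val i == 1%N then p2 else p3.
pose q := fun i : 'I_3 => if val i == 0%N then q1 else if val i == 1%N then q2 else q3.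
have feasE : forall z, socp_feasible M nv p q z <->
   (feasA (Pu *m z) ((Pd *m z) 0 0) /\ objA (Pu *m z) ((Pd *m z) 0 0) <= (Ps *m z) 0 0).
  move=> z; split.
    move=> H; have h1 := H (@Ordinal 3 0 isT); have h2 := H (@Ordinal 3 1 isT).
    have h3 := H (@Ordinal 3 2 isT).
    by move: h1 h2 h3; rewrite /M /nv /p /q /= soc1 soc2 soc3.
  move=> [[h1 h2] h3]; case=> [[|[|[|k]]] Hk] //=.
  - by rewrite /M /nv /p /q /= soc1.
  - by rewrite /M /nv /p /q /= soc2.
  - by rewrite /M /nv /p /q /= soc3.
exists (m + 2)%N, 3%N, ki, M, nv, p, q, Ps^T, Pu, Pd; split.
  by move=> z /feasE [H1 H2]; rewrite trmxK.
move=> u d fe.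
pose w : 'cV[R]_2 := \col_j (if j == ord0 then d else objA u d).
exists (col_mx u w); rewrite trmxK Pu_col Pd_col Ps_col !mxE /=.
split; last by [].
by apply/feasE; rewrite Pu_col Pd_col Ps_col !mxE /=; split.
Qed.
End ABS.

Section MainAux.
Variable R : realType.
Lemma mx00D (A B : 'M[R]_(1, 1)) : (A + B) 0 0 = A 0 0 + B 0 0.
Proof. by rewrite !mxE. Qed.

Lemma rowmx0y m (g : 'rV[R]_m) (u : 'cV[R]_m) :
  (row_mx (0 : 'rV[R]_1) g *m yvec u) 0 0 = (g *m u) 0 0.
Proof. by rewrite /yvec mul_row_col mul0mx add0r. Qed.
Lemma aux_iff (a b c e f d a' b' c' e' f' : R) :
  (a + b + c + e + f <= d /\ 0 <= a' + b' + c' - e' + f') <->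
  (a + f + (b + c) + e <= d /\ e' <= a' + f' + (b' + c')).
Proof. by split; move=> [h1 h2]; split; lra. Qed.
End MainAux.

Theorem theorem1 (R : realType) (n m : nat)
  (X Rr : set 'cV[R]_n) (x : 'cV[R]_n)
  (fhat : 'cV[R]_n -> 'cV[R]_n) (ghat : 'cV[R]_n -> 'M[R]_(n, m))
  (V h : 'cV[R]_n -> R)
  (kbV kbh : 'I_(1 + m) -> 'cV[R]_n -> 'cV[R]_n -> R)
  (N : nat) (Xd : 'I_N -> 'cV[R]_n) (Yd : 'M[R]_(1 + m, N))
  (wV wh : 'cV[R]_N) (sn2 : R)
  (rho lam beta : R) (a : \bar R) (alpha : R -> R) :
  compact X -> convex_cV X -> Rr `<=` X -> Rr x ->
  locally_lipschitz fhat -> locally_lipschitz ghat ->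
  C1_on X V -> C1_on setT h ->
  (forall i, pd_kernel_on Rr (kbV i)) -> (forall i, pd_kernel_on Rr (kbh i)) ->
  (forall j, Rr (Xd j)) -> (forall j, Yd ord0 j = 1) -> 0 < sn2 ->
  0 < rho -> 0 < lam -> 0 <= beta ->
  classK a alpha -> classK_dom a (h x) ->
  let obj := fun (u : 'cV[R]_m) (d : R) => norm2 u ^+ 2 + rho * d ^+ 2 in
  let feas := fun (u : 'cV[R]_m) (d : R) =>
    lie_f V fhat x + (lie_g V ghat x *m u) 0 0
      + gp_mean kbV Xd Yd wV sn2 x u + beta * gp_sd kbV Xd Yd sn2 x u
      + lam * V x <= d
    /\
    0 <= lie_f h fhat x + (lie_g h ghat x *m u) 0 0
      + gp_mean kbh Xd Yd wh sn2 x u - beta * gp_sd kbh Xd Yd sn2 x u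
      + alpha (h x) in
  convex_problem obj feas /\ socp_equivalent obj feas.
Proof.
move=> _ _ _ Rx _ _ _ _ hkV hkh hXd _ hsn hrho _ hbeta _ _ obj feas.
have [L1 HL1] := psd_factor (Sm_psd Yd hkV Rx hXd hsn).
have [L2 HL2] := psd_factor (Sm_psd Yd hkh Rx hXd hsn).
have sdE : forall kb (L : 'M[R]_(1 + m)),
    (forall y, (y^T *m Sm kb Xd Yd sn2 x *m y) 0 0 = norm2 (L *m y) ^+ 2) ->
    forall u, gp_sd kb Xd Yd sn2 x u = norm2 (L *m yvec u).
  move=> kb L H u; rewrite /gp_sd gp_var_Sm H sqrtr_sqr ger0_norm //.
  exact: norm2_ge0.
pose r1 := row_mx (0 : 'rV[R]_1) (lie_g V ghat x)
   + (wV^T *m invmx (gram kbV Xd Yd + sn2%:M) *m (Kbar kbV Xd Yd x)^T).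
pose r2 := row_mx (0 : 'rV[R]_1) (lie_g h ghat x)
   + (wh^T *m invmx (gram kbh Xd Yd + sn2%:M) *m (Kbar kbh Xd Yd x)^T).
have -> : feas = feasA r1 r2 (beta *: L1) (beta *: L2)
    (lie_f V fhat x + lam * V x) (lie_f h fhat x + alpha (h x)).
  apply: funext => u; apply: funext => d; apply: propext; rewrite /feas /feasA.
  have E1 : (r1 *m yvec u) 0 0 = (lie_g V ghat x *m u) 0 0 + gp_mean kbV Xd Yd wV sn2 x u.
    by rewrite /r1 mulmxDl mx00D rowmx0y.
  have E2 : (r2 *m yvec u) 0 0 = (lie_g h ghat x *m u) 0 0 + gp_mean kbh Xd Yd wh sn2 x u.
    by rewrite /r2 mulmxDl mx00D rowmx0y.
  have N1 : norm2 (beta *: L1 *m yvec u) = beta * gp_sd kbV Xd Yd sn2 x u.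
    by rewrite -scalemxAl norm2_scale // (sdE _ _ HL1).
  have N2 : norm2 (beta *: L2 *m yvec u) = beta * gp_sd kbh Xd Yd sn2 x u.
    by rewrite -scalemxAl norm2_scale // (sdE _ _ HL2).
  rewrite E1 E2 N1 N2.
  exact: aux_iff.
have -> : obj = objA rho by [].
by split; [exact: convexA | exact: socpA].
Qed.
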